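(* Suppose $\{\varphi_i\}_{i=1}^N$ is a set of linearly independent unit vectors in $\mathbb{R}^N$ such that the hyperplanes $\{\varphi_i^\perp\}_{i=1}^N$ do norm retrieval in $\mathbb{R}^N$. If $x,y\in\mathbb{R}^N$ satisfy $\langle x,\varphi_i\rangle=\pm1$ and $\langle y,\varphi_i\rangle=\pm1$ for all $i\in\{1,\dots,N\}$ (with signs allowed to depend on $i$ and to differ between $x$ and $y$), then $\|x\|=\|y\|$.
   Context: For a nonzero vector $\varphi\in\mathbb{R}^N$, $\varphi^\perp=\{x\in\mathbb{R}^N:\langle x,\varphi\rangle=0\}$. A family of subspaces $\{W_i\}_{i=1}^M$ of $\mathbb{R}^N$ with orthogonal projections $\{P_i\}_{i=1}^M$ does norm retrieval if for all $x,y\in\mathbb{R}^N$, $\|P_ix\|=\|P_iy\|$ for all $i$ implies $\|x\|=\|y\|$. *)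

(* Defs.v *)
From mathcomp Require Import all_boot all_order all_algebra.
From mathcomp Require Import reals.
Set Implicit Arguments. Unset Strict Implicit. Unset Printing Implicit Defensive.
Import Order.TTheory GRing.Theory Num.Theory.
Local Open Scope ring_scope.

Definition dotv (R : realType) (N : nat) (x y : 'rV[R]_N) : R :=
  \sum_(j < N) x 0 j * y 0 j.

Definition normv (R : realType) (N : nat) (x : 'rV[R]_N) : R :=
  Num.sqrt (dotv x x).

Definition proj_perp (R : realType) (N : nat) (phi x : 'rV[R]_N) : 'rV[R]_N :=
  x - (dotv x phi / dotv phi phi) *: phi.

Definition hyperplanes_norm_retrieval (R : realType) (N M : nat)
  (phi : 'I_M -> 'rV[R]_N) : Prop :=
  forall x y : 'rV[R]_N,
    (forall i, normv (proj_perp (phi i) x) = normv (proj_perp (phi i) y)) ->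
    normv x = normv y.

Definition lin_indep (R : realType) (N M : nat) (phi : 'I_M -> 'rV[R]_N) : bool :=
  row_free (\matrix_(i < M) phi i).

(* Main.v *)
Require Import Defs.
From mathcomp Require Import all_boot all_order all_algebra.
From mathcomp Require Import reals.
From mathcomp Require Import ring lra.
Import Order.TTheory GRing.Theory Num.Theory.
Local Open Scope ring_scope.

Section Aux.
Variables (R : realType) (N : nat).
Implicit Types (u v w : 'rV[R]_N) (c : R).

Lemma dotvC u v : dotv u v = dotv v u.
Proof. by apply: eq_bigr => j _; rewrite mulrC. Qed.

Lemma dotvDl u v w : dotv (u + v) w = dotv u w + dotv v w.
Proof. rewrite /dotv -big_split /=; apply: eq_bigr => j _; by rewrite mxE mulrDl. Qed.

Lemma dotvZl c u w : dotv (c *: u) w = c * dotv u w.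
Proof. rewrite /dotv mulr_sumr; apply: eq_bigr => j _; by rewrite mxE mulrA. Qed.

Lemma dotvNl u w : dotv (- u) w = - dotv u w.
Proof. by rewrite -scaleN1r dotvZl mulN1r. Qed.

Lemma dotv_ge0 u : 0 <= dotv u u.
Proof. by apply: sumr_ge0 => j _; rewrite -expr2 sqr_ge0. Qed.

Lemma dotv_proj phi u : dotv phi phi = 1 ->
  dotv (proj_perp phi u) (proj_perp phi u) = dotv u u - dotv u phi ^+ 2.
Proof.
move=> h1; rewrite /proj_perp.
rewrite !dotvDl !dotvNl !dotvZl (dotvC _ (u - _)) !dotvDl !dotvNl !dotvZl.
rewrite (dotvC phi (_ - _)) !dotvDl !dotvNl !dotvZl h1 divr1 (dotvC phi u).
ring.
Qed.

Lemma normv_eq u v : (normv u = normv v) <-> (dotv u u = dotv v v).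
Proof.
rewrite /normv; split; last by move=> ->.
by move/eqP; rewrite eqr_sqrt ?dotv_ge0 // => /eqP.
Qed.

Lemma normv1 u : normv u = 1 -> dotv u u = 1.
Proof. by move=> h; rewrite -[LHS]sqr_sqrtr ?dotv_ge0 // -/(normv u) h expr1n. Qed.
End Aux.
Arguments dotvC {R N}. Arguments dotvDl {R N}. Arguments dotvZl {R N}. Arguments dotvNl {R N}.
Arguments dotv_ge0 {R N}. Arguments dotv_proj {R N}. Arguments normv_eq {R N}. Arguments normv1 {R N}.

Lemma core (R : realType) (N : nat) (phi : 'I_N -> 'rV[R]_N) x y :
  (forall i, dotv (phi i) (phi i) = 1) ->
  hyperplanes_norm_retrieval phi ->
  (forall i, dotv x (phi i) ^+ 2 = 1) ->
  (forall i, dotv y (phi i) ^+ 2 = 1) ->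
  1 <= dotv x x -> 1 < dotv y y -> dotv x x = dotv y y.
Proof.
move=> h1 hnr hx hy ha hb.
set a := dotv x x; set b := dotv y y.
set l := Num.sqrt ((a - 1) / (b - 1)).
have hl2 : l ^+ 2 = (a - 1) / (b - 1).
  by rewrite sqr_sqrtr // divr_ge0 // subr_ge0 // ltW.
have hb1 : b - 1 != 0 by rewrite subr_eq0 gt_eqF.
have hl2' : l ^+ 2 * (b - 1) = a - 1 by rewrite hl2 divfK.
have := hnr x (l *: y) => /(_ _)/normv_eq.
rewrite dotvZl dotvC dotvZl -/b.
move=> H; have {}H : a = l * (l * b).
  apply: H => i; apply/normv_eq; rewrite !dotv_proj // hx dotvZl.
  rewrite (dotvC y) !dotvZl exprMn hy -/a -/b.
  move: hl2'; rewrite mulrBr mulr1 expr2 mulrA => h2; lra.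
have e : l ^+ 2 = 1.
  have : l ^+ 2 * b = a by rewrite H expr2 mulrA.
  move: hl2'; rewrite mulrBr mulr1 => h2 h3.
  lra.
rewrite H mulrA -expr2 e mul1r //.
Qed.

Arguments core {R N phi x y}.

Theorem mainTheorem4 (R : realType) (N : nat) (phi : 'I_N -> 'rV[R]_N) :
  lin_indep phi ->
  (forall i, normv (phi i) = 1) ->
  hyperplanes_norm_retrieval phi ->
  forall x y : 'rV[R]_N,
    (forall i, dotv x (phi i) = 1 \/ dotv x (phi i) = -1) ->
    (forall i, dotv y (phi i) = 1 \/ dotv y (phi i) = -1) ->
    normv x = normv y.
Proof.
move=> _ hn hnr x y hx hy.
have h1 i : dotv (phi i) (phi i) = 1 by apply: normv1.
have sq z : (forall i, dotv z (phi i) = 1 \/ dotv z (phi i) = -1) ->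
    forall i, dotv z (phi i) ^+ 2 = 1.
  by move=> hz i; case: (hz i) => ->; rewrite ?sqrrN expr1n.
have hx2 := sq x hx; have hy2 := sq y hy.
apply/normv_eq; clear sq.
case: N phi hn hnr x y hx hy h1 hx2 hy2 => [|n] phi hn hnr x y hx hy h1 hx2 hy2.
  by rewrite /dotv !big_ord0.
have ge1 z : (forall i, dotv z (phi i) ^+ 2 = 1) -> 1 <= dotv z z.
  move=> hz; have := dotv_ge0 (proj_perp (phi ord0) z).
  by rewrite dotv_proj // hz subr_ge0.
have ha := ge1 x hx2; have hb := ge1 y hy2.
have [hb1|] := ltrP 1 (dotv y y); first exact: (core h1 hnr).
have [ha1|] := ltrP 1 (dotv x x); first by move=> _; symmetry; exact: (core h1 hnr).
move=> ha' hb'; lra.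
Qed.
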